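(* Let $D$ be any derivation of $\mathfrak{g}_1\underline{\times}\mathfrak{g}_2$, and write $D_{ij}=p_iDp_j$. Then: (1) for $i=1,2$, the restriction of $D_{ii}$ to $\mathfrak{g}_i$ is a derivation of $\mathfrak{g}_i$; (2) $D_{21}(C^1\mathfrak{g}_1)=D_{12}(C^1\mathfrak{g}_2)=0$; (3) $D_{i3}(\mathfrak{g}_3)\subset Z(\mathfrak{g}_i)$ for $i=1,2$; (4) $D_{12}(\mathfrak{g}_2)\subset T_1$ and $D_{21}(\mathfrak{g}_1)\subset T_2$, where $T_i=\{Y\in\mathfrak{g}_i : [Y,\mathfrak{g}_i]\subset Z(\mathfrak{g}_i)\}$ for $i=1,2$.
   Context: All Lie algebras are finite-dimensional, complex, nilpotent and nonabelian. $C^1\mathfrak{g}=[\mathfrak{g},\mathfrak{g}]$; $Z(\mathfrak{g})$ is the center. Product by generators: for $\mathfrak{g}_1,\mathfrak{g}_2$ of dimensions $m_1,m_2$ take bases $\{X_1,\dots,X_{m_1}\}$, $\{X'_1,\dots,X'_{m_2}\}$ such that $X_1,\dots,X_{n_1}$ generate $\mathfrak{g}_1$ and $X_{n_1+1},\dots,X_{m_1}$ span $C^1\mathfrak{g}_1$, and similarly for $\mathfrak{g}_2$ with $n_2$ generators. $\mathfrak{g}_1\underline{\times}\mathfrak{g}_2$ is the Lie algebra on $\mathfrak{g}_1\oplus\mathfrak{g}_2\oplus\mathfrak{g}_3$, $\mathfrak{g}_3=\langle Z_1,\dots,Z_{n_1n_2}\rangle$, with the brackets of $\mathfrak{g}_1$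 and of $\mathfrak{g}_2$, $[X_i,X'_j]=Z_{(i-1)n_2+j}$ for $i\le n_1$, $j\le n_2$, $[X_i,X'_j]=0$ otherwise, and $\mathfrak{g}_3$ central. $p_i$ ($i=1,2,3$) is the projection of $\mathfrak{g}_1\oplus\mathfrak{g}_2\oplus\mathfrak{g}_3$ onto $\mathfrak{g}_i$. *)

(* Defs.v *)
From mathcomp Require Import all_boot all_algebra.
From mathcomp Require Import complex Rstruct.
Set Implicit Arguments. Unset Strict Implicit. Unset Printing Implicit Defensive.
Import GRing.Theory.
Local Open Scope ring_scope.

Definition Cplx : fieldType := complex Rdefinitions.R.

Section LieDefs.
Variables (F : fieldType) (V : lmodType F).
Implicit Types (br : V -> V -> V) (x y z : V).

Definition bilinear_br br :=
  forall (a : F) x y z,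
    br (a *: x + y) z = a *: br x z + br y z /\
    br z (a *: x + y) = a *: br z x + br z y.

Definition lie_bracket br :=
  [/\ bilinear_br br,
      (forall x, br x x = 0) &
      (forall x y z, br x (br y z) + br y (br z x) + br z (br x y) = 0)].

Definition nilpotent_br br :=
  exists N : nat, forall x (s : seq V), size s = N -> foldl br x s = 0.

Definition nonabelian_br br := exists x y, br x y != 0.

Definition derived br (x : V) : Prop :=
  exists s : seq (V * V), x = \sum_(p <- s) br p.1 p.2.

Definition center br (z : V) : Prop := forall x, br z x = 0.

Definition Tset br (y : V) : Prop := forall x, center br (br y x).

Definition linear_map (d : V -> V) :=
  forall (a : F) x y, d (a *: x + y) = a *: d x + d y.

Definition derivation br (d : V -> V) :=
  linear_map d /\ forall x y, d (br x y) = br (d x) y + br x (d y).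

Definition subalgebra br (S : V -> Prop) :=
  [/\ S 0, (forall (a : F) x y, S x -> S y -> S (a *: x + y)) &
      (forall x y, S x -> S y -> S (br x y))].

Definition generates br (P : V -> Prop) :=
  forall S, subalgebra br S -> (forall x, P x -> S x) -> forall x, S x.

End LieDefs.

(* For a bracket on F^m (row vectors), the standard basis e_0,...,e_{m-1}
   is adapted: e_0..e_{n-1} generate, and e_n..e_{m-1} span C^1 g. *)
Definition adapted_basis (F : fieldType) (m n : nat)
    (br : 'rV[F]_m -> 'rV[F]_m -> 'rV[F]_m) :=
  [/\ (n <= m)%N,
      generates br (fun x => exists i : 'I_m, (i < n)%N /\ x = delta_mx 0 i) &
      (forall x, derived br x <-> forall i : 'I_m, (i < n)%N -> x 0 i = 0)].

(* i-th coordinate of a row vector (0 if out of range) *)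
Definition coord (F : fieldType) (m : nat) (v : 'rV[F]_m) (i : nat) : F :=
  if (insub i : option 'I_m) is Some j then v 0 j else 0.

(* Product by generators g1 x_ g2 on g1 (+) g2 (+) g3, g3 = F^(n1*n2);
   0-indexed: [X_i, X'_j] = Z_(i*n2+j) for i < n1, j < n2. *)
Definition prod_space (F : fieldType) (m1 m2 k : nat) :=
  ('rV[F]_m1 * 'rV[F]_m2 * 'rV[F]_k)%type.

Definition prod_bracket (F : fieldType) (m1 m2 n1 n2 : nat)
    (br1 : 'rV[F]_m1 -> 'rV[F]_m1 -> 'rV[F]_m1)
    (br2 : 'rV[F]_m2 -> 'rV[F]_m2 -> 'rV[F]_m2)
    (x y : prod_space F m1 m2 (n1 * n2)) : prod_space F m1 m2 (n1 * n2) :=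
  (br1 x.1.1 y.1.1, br2 x.1.2 y.1.2,
   \row_(k < n1 * n2)
     (coord x.1.1 (k %/ n2) * coord y.1.2 (k %% n2)
      - coord y.1.1 (k %/ n2) * coord x.1.2 (k %% n2))).

(* Main.v *)
Require Import Defs.
From mathcomp Require Import all_boot all_algebra.
From mathcomp Require Import complex Rstruct.
Local Open Scope ring_scope.
Import GRing.Theory.

Section Gen.
Variables (F : fieldType) (V : lmodType F) (br : V -> V -> V).

Lemma br0l (Hb : bilinear_br br) z : br 0 z = 0.
Proof.
have [H _] := Hb 1 0 0 z. move: H; rewrite !scale1r addr0 => H.
by apply: (addrI (br 0 z)); rewrite addr0 -H.
Qed.

Lemma br0r (Hb : bilinear_br br) z : br z 0 = 0.
Proof.
have [_ H] := Hb 1 0 0 z. move: H; rewrite !scale1r addr0 => H.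
by apply: (addrI (br z 0)); rewrite addr0 -H.
Qed.

Lemma brNl (Hb : bilinear_br br) x z : br (- x) z = - br x z.
Proof.
have [H _] := Hb (-1) x 0 z. by rewrite addr0 br0l // addr0 !scaleN1r in H.
Qed.

Lemma br_anti (Hl : lie_bracket br) x y : br x y = - br y x.
Proof.
case: Hl => Hb Ha _.
have [H1 _] := Hb 1 x y (x + y). have [_ H2] := Hb 1 x y x. have [_ H3] := Hb 1 x y y.
rewrite !scale1r in H1 H2 H3.
move: (Ha (x + y)); rewrite H1 H2 H3 !Ha add0r addr0 => /eqP.
by rewrite addr_eq0 => /eqP.
Qed.

Lemma lin0 (d : V -> V) (Hd : linear_map d) : d 0 = 0.
Proof.
have := Hd 1 0 0; rewrite !scale1r addr0 => H.
by apply: (addrI (d 0)); rewrite addr0 -H.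
Qed.

Lemma linD (d : V -> V) (Hd : linear_map d) x y : d (x + y) = d x + d y.
Proof. by have := Hd 1 x y; rewrite !scale1r. Qed.

End Gen.
Arguments br0l {F V br}. Arguments br0r {F V br}. Arguments brNl {F V br}.
Arguments br_anti {F V br}. Arguments lin0 {F V d}. Arguments linD {F V d}.

Lemma coord0 (F : fieldType) m i : Defs.coord (0 : 'rV[F]_m) i = 0.
Proof. by rewrite /Defs.coord; case: insub => // j; rewrite mxE. Qed.

Theorem mainTheorem9 (m1 n1 m2 n2 : nat)
  (br1 : 'rV[Cplx]_m1 -> 'rV[Cplx]_m1 -> 'rV[Cplx]_m1)
  (br2 : 'rV[Cplx]_m2 -> 'rV[Cplx]_m2 -> 'rV[Cplx]_m2)
  (L1 : lie_bracket br1) (N1 : nilpotent_br br1) (A1 : nonabelian_br br1)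
  (B1 : adapted_basis n1 br1)
  (L2 : lie_bracket br2) (N2 : nilpotent_br br2) (A2 : nonabelian_br br2)
  (B2 : adapted_basis n2 br2)
  (D : prod_space Cplx m1 m2 (n1 * n2) -> prod_space Cplx m1 m2 (n1 * n2))
  (HD : derivation (prod_bracket (n1:=n1) (n2:=n2) br1 br2) D) :
  (* (1) *)
  (derivation br1 (fun a => (D (a, 0, 0)).1.1) /\
   derivation br2 (fun b => (D (0, b, 0)).1.2)) /\
  (* (2) *)
  ((forall a, derived br1 a -> (D (a, 0, 0)).1.2 = 0) /\
   (forall b, derived br2 b -> (D (0, b, 0)).1.1 = 0)) /\
  (* (3) *)
  (forall z : 'rV[Cplx]_(n1 * n2),
     center br1 (D (0, 0, z)).1.1 /\ center br2 (D (0, 0, z)).1.2) /\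
  (* (4) *)
  ((forall b, Tset br1 (D (0, b, 0)).1.1) /\
   (forall a, Tset br2 (D (a, 0, 0)).1.2)).
Proof.
case: HD => HL HB.
have Hb1 : bilinear_br br1 by case: L1.
have Hb2 : bilinear_br br2 by case: L2.
have D0 : D 0 = 0 := lin0 HL.
have pbAA : forall a a', (prod_bracket (n1:=n1) (n2:=n2) br1 br2) (a, 0, 0) (a', 0, 0) = (br1 a a', 0, 0).
  move=> a a'; rewrite /prod_bracket /= br0l //; congr (_, _, _).
  by apply/rowP => k; rewrite !mxE !coord0 !mulr0 subrr.
have pbBB : forall b b', (prod_bracket (n1:=n1) (n2:=n2) br1 br2) (0, b, 0) (0, b', 0) = (0, br2 b b', 0).
  move=> b b'; rewrite /prod_bracket /= br0l //; congr (_, _, _).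
  by apply/rowP => k; rewrite !mxE !coord0 !mul0r subrr.
have pbZA : forall z a, (prod_bracket (n1:=n1) (n2:=n2) br1 br2) (0, 0, z) (a, 0, 0) = 0.
  move=> z a; rewrite /prod_bracket /= !br0l //; congr (_, _, _).
  by apply/rowP => k; rewrite !mxE !coord0 !mulr0 subrr.
have pbZB : forall z b, (prod_bracket (n1:=n1) (n2:=n2) br1 br2) (0, 0, z) (0, b, 0) = 0.
  move=> z b; rewrite /prod_bracket /= !br0l //; congr (_, _, _).
  by apply/rowP => k; rewrite !mxE !coord0 !mulr0 !mul0r subrr.
have pbAB : forall a b, (prod_bracket (n1:=n1) (n2:=n2) br1 br2) (a, 0, 0) (0, b, 0) = (0, 0, ((prod_bracket (n1:=n1) (n2:=n2) br1 br2) (a, 0, 0) (0, b, 0)).2).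
  by move=> a b; rewrite /prod_bracket /= br0l // br0r.
have P3 : forall z : 'rV[Cplx]_(n1 * n2),
     center br1 (D (0, 0, z)).1.1 /\ center br2 (D (0, 0, z)).1.2.
  move=> z; split => x.
    have := congr1 (fun p => p.1.1) (HB (0, 0, z) (x, 0, 0)).
    by rewrite pbZA D0 /= br0l // addr0 => <-.
  have := congr1 (fun p => p.1.2) (HB (0, 0, z) (0, x, 0)).
  by rewrite pbZB D0 /= br0l // addr0 => <-.
split; [split|split; [split|split; [exact: P3|split]]].
- split.
    move=> c a a'.
    have -> : ((c *: a + a', 0, 0) : prod_space Cplx m1 m2 (n1 * n2))
              = c *: (a, 0, 0) + (a', 0, 0).
      change (((c *: a + a', 0, 0) : prod_space Cplx m1 m2 (n1 * n2)) = (c *: a + a', c *: (0:'rV[Cplx]_m2) + 0, c *: (0:'rV[Cplx]_(n1*n2)) + 0)).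
      by rewrite !scaler0 !addr0.
    by rewrite HL.
  by move=> x y; have := congr1 (fun p => p.1.1) (HB (x, 0, 0) (y, 0, 0)); rewrite pbAA => ->.
- split.
    move=> c a a'.
    have -> : ((0, c *: a + a', 0) : prod_space Cplx m1 m2 (n1 * n2))
              = c *: (0, a, 0) + (0, a', 0).
      change (((0, c *: a + a', 0) : prod_space Cplx m1 m2 (n1 * n2)) = (c *: (0:'rV[Cplx]_m1) + 0, c *: a + a', c *: (0:'rV[Cplx]_(n1*n2)) + 0)).
      by rewrite !scaler0 !addr0.
    by rewrite HL.
  by move=> x y; have := congr1 (fun p => p.1.2) (HB (0, x, 0) (0, y, 0)); rewrite pbBB => ->.
- move=> a [s ->]; elim: s => [|p s IH].
    by rewrite big_nil -[((0, 0, 0) : prod_space Cplx m1 m2 (n1 * n2))]/(0 : prod_space Cplx m1 m2 (n1 * n2)) D0.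
  rewrite big_cons.
  have -> : ((br1 p.1 p.2 + \sum_(q <- s) br1 q.1 q.2, 0, 0) : prod_space Cplx m1 m2 (n1 * n2))
      = (br1 p.1 p.2, 0, 0) + (\sum_(q <- s) br1 q.1 q.2, 0, 0).
    change (((br1 p.1 p.2 + \sum_(q <- s) br1 q.1 q.2, 0, 0) : prod_space Cplx m1 m2 (n1 * n2))
      = (br1 p.1 p.2 + \sum_(q <- s) br1 q.1 q.2, (0:'rV[Cplx]_m2) + 0, (0:'rV[Cplx]_(n1*n2)) + 0)).
    by rewrite !addr0.
  rewrite linD // /= IH addr0.
  have := congr1 (fun q => q.1.2) (HB (p.1, 0, 0) (p.2, 0, 0)).
  by rewrite pbAA => -> /=; rewrite ?(br0l Hb1) ?(br0r Hb1) ?(br0l Hb2) ?(br0r Hb2) ?addr0.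
- move=> b [s ->]; elim: s => [|p s IH].
    by rewrite big_nil -[((0, 0, 0) : prod_space Cplx m1 m2 (n1 * n2))]/(0 : prod_space Cplx m1 m2 (n1 * n2)) D0.
  rewrite big_cons.
  have -> : ((0, br2 p.1 p.2 + \sum_(q <- s) br2 q.1 q.2, 0) : prod_space Cplx m1 m2 (n1 * n2))
      = (0, br2 p.1 p.2, 0) + (0, \sum_(q <- s) br2 q.1 q.2, 0).
    change (((0, br2 p.1 p.2 + \sum_(q <- s) br2 q.1 q.2, 0) : prod_space Cplx m1 m2 (n1 * n2))
      = ((0:'rV[Cplx]_m1) + 0, br2 p.1 p.2 + \sum_(q <- s) br2 q.1 q.2, (0:'rV[Cplx]_(n1*n2)) + 0)).
    by rewrite !addr0.
  rewrite linD // /= IH addr0.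
  have := congr1 (fun q => q.1.1) (HB (0, p.1, 0) (0, p.2, 0)).
  by rewrite pbBB => -> /=; rewrite ?(br0l Hb1) ?(br0r Hb1) ?(br0l Hb2) ?(br0r Hb2) ?addr0.
- move=> b x y.
  have Hc : center br1 (br1 x (D (0, b, 0)).1.1).
    have := congr1 (fun p => p.1.1) (HB (x, 0, 0) (0, b, 0)).
    rewrite {1}pbAB /= br0r // add0r => <-.
    exact: (P3 _).1.
  by rewrite (br_anti L1 (D (0, b, 0)).1.1 x) (brNl Hb1) Hc oppr0.
- move=> a x.
  have := congr1 (fun p => p.1.2) (HB (a, 0, 0) (0, x, 0)).
  rewrite {1}pbAB /= br0l // addr0 => <-.
  exact: (P3 _).2.
Qed.
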